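(* Assume the standing hypotheses (H). If $T\subseteq V(G)$ is a stable set with $|T|=3$, then \[\sum_{\{u,v\}\subseteq T,\ u\ne v}|L(u)\cap L(v)|\ \ge\ k.\] Consequently (Corollary 21), every part $A$ of $G$ with $|A|\ge3$ contains distinct $u,v$ with $|L(u)\cap L(v)|\ge k/3$.
   Context: A list assignment $L$ assigns to each vertex $v$ a set $L(v)$ of colors; an $L$-coloring is a proper coloring $f$ with $f(v)\in L(v)$ for all $v$; $\mathrm{ch}$ denotes choice number and $\chi$ chromatic number. A part of a complete multipartite graph is one of its maximal stable sets. Standing hypotheses (H): $k\ge1$ and $n\ge 2k+2$ are integers; $G$ is a complete $k$-partite graph (exactly $k$ nonempty parts) on $n$ vertices; $L$ is a list assignment for $G$ with $|L(v)|\ge\lceil (n+k-1)/3\rceil$ for every vertex $v$; $G$ has no $L$-coloring; $\left|\bigcup_{v\in V(G)}L(v)\right|\le n-1$; and every graph $H$ with fewer than $n$ vertices satisfies $\mathrm{ch}(H)\le\max\{\chi(H),\lceil(|V(H)|+\chi(H)-1)/3\rceil\}$. *)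

(* Defs.v *)
From mathcomp Require Import all_boot.
Set Implicit Arguments. Unset Strict Implicit. Unset Printing Implicit Defensive.

Definition ceil3 (x : nat) : nat := (x + 2) %/ 3.

Definition simple_graph (W : finType) (e : rel W) : Prop :=
  symmetric e /\ irreflexive e.

Definition colorable (W : finType) (e : rel W) (c : nat) : Prop :=
  exists f : W -> 'I_c, forall x y, e x y -> f x != f y.

Definition is_chromatic_number (W : finType) (e : rel W) (c : nat) : Prop :=
  colorable e c /\ forall c', colorable e c' -> c <= c'.

Definition L_coloring (W : finType) (e : rel W) (C : finType)
  (L : W -> {set C}) (f : W -> C) : Prop :=
  (forall w, f w \in L w) /\ (forall x y, e x y -> f x != f y).

Definition choosable (W : finType) (e : rel W) (m : nat) : Prop :=
  forall (C : finType) (L : W -> {set C}),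
    (forall w, m <= #|L w|) -> exists f : W -> C, L_coloring e L f.

(* the complete multipartite graph whose parts are the fibres of p *)
Definition multipartite_rel (V : finType) (k : nat) (p : V -> 'I_k) : rel V :=
  fun u v => p u != p v.

(* Main.v *)
Require Import Defs.
From mathcomp Require Import all_boot.
From mathcomp Require Import zify.
From Stdlib Require Import Classical.

Lemma cardI (C : finType) (A : {set C}) : #|A| = \sum_c (c \in A : nat).
Proof. by rewrite -sum1_card big_mkcond; apply: eq_bigr => c _; case: (c \in A). Qed.

Lemma key (V C : finType) (L : V -> {set C}) (T : {set V}) :
  \sum_(v in T) #|L v| <= \sum_(P : {set V} | (P \subset T) && (#|P|==2)) #|\bigcap_(x in P) L x| + #|\bigcup_(v in T) L v|.
Proof.
pose S c := [set v in T | c \in L v].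
have E1 : \sum_(v in T) #|L v| = \sum_c #|S c|.
  under eq_bigr do rewrite cardI.
  rewrite exchange_big; apply: eq_bigr => c _.
  rewrite cardI big_mkcond; apply: eq_bigr => v _ /=.
  by rewrite inE; case: (v \in T); case: (c \in L v).
have E2 : \sum_(P : {set V} | (P \subset T) && (#|P|==2)) #|\bigcap_(x in P) L x|
          = \sum_c 'C(#|S c|, 2).
  apply: etrans; first by apply: eq_bigr => P _; apply: cardI.
  rewrite exchange_big /=; apply eq_bigr; intros c _.
  rewrite -cards_draws cardI big_mkcond /=; apply: eq_bigr => P _.
  rewrite !inE.
  have sST : S c \subset T by apply/subsetP => v; rewrite inE => /andP[].
  case sPT: (P \subset T) => /=; last first.
    by case sPS: (P \subset S c) => //; rewrite (subset_trans sPS sST) in sPT.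
  have -> : (c \in \bigcap_(x in P) L x) = (P \subset S c).
    apply/bigcapP/subsetP.
    - by move=> H v vP; rewrite inE (subsetP sPT) //=; exact: H.
    - by move=> H v vP; move: (H v vP); rewrite inE => /andP[].
  by case: (P \subset S c); case: (#|P| == 2).
have E3 : #|\bigcup_(v in T) L v| = \sum_c (0 < #|S c|).
  rewrite cardI; apply: eq_bigr => c _.
  congr nat_of_bool; apply/bigcupP/card_gt0P.
  - by move=> [v vT cL]; exists v; rewrite inE vT.
  - by move=> [v]; rewrite inE => /andP[vT cL]; exists v.
rewrite E1 E2 E3 -big_split /=; apply: leq_sum => c _.
case: #|S c| => [|[|d]] //=; rewrite bin2 /= uphalfE; nia.
Qed.

Theorem lemma20 (k n : nat) (V : finType) (p : V -> 'I_k)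
  (C : finType) (L : V -> {set C}) :
  1 <= k ->
  2 * k + 2 <= n ->
  #|V| = n ->
  (forall i : 'I_k, exists v : V, p v = i) ->
  (forall v : V, ceil3 (n + k - 1) <= #|L v|) ->
  ~ (exists f : V -> C, L_coloring (multipartite_rel p) L f) ->
  #|\bigcup_(v : V) L v| <= n - 1 ->
  (forall (W : finType) (e : rel W), simple_graph e -> #|W| < n ->
     forall c, is_chromatic_number e c ->
       choosable e (maxn c (ceil3 (#|W| + c - 1)))) ->
  (forall T : {set V}, #|T| = 3 ->
     (forall u v, u \in T -> v \in T -> ~~ multipartite_rel p u v) ->
     k <= \sum_(P : {set V} | (P \subset T) && (#|P| == 2))
            #|\bigcap_(x in P) L x|)
  /\
  (forall i : 'I_k, 3 <= #|[set x | p x == i]| ->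
     exists u v : V, [/\ p u = i, p v = i, u != v &
                         k <= 3 * #|L u :&: L v|]).
Proof.
move=> k1 kn Vn _ Lsz _ Un _.
have P1 : forall T : {set V}, #|T| = 3 ->
     k <= \sum_(P : {set V} | (P \subset T) && (#|P| == 2)) #|\bigcap_(x in P) L x|.
  move=> T T3.
  have H := @key V C L T.
  have H1 : \sum_(v in T) ceil3 (n + k - 1) <= \sum_(v in T) #|L v|.
    by apply: leq_sum => v _; apply: Lsz.
  rewrite sum_nat_const T3 in H1.
  have H2 : #|\bigcup_(v in T) L v| <= #|\bigcup_(v : V) L v|.
    apply: subset_leq_card; apply/subsetP => c /bigcupP [v _ cv].
    by apply/bigcupP; exists v.
  move: H1 H2 H Un; rewrite /ceil3; lia.
split; first by move=> T T3 _; exact: P1.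
move=> i A3.
set A := [set x | p x == i] in A3.
have [a aA] : exists a, a \in A by apply/card_gt0P; lia.
have A1 : 2 <= #|A :\ a| by move: A3; rewrite (cardsD1 a) aA; lia.
have [b bA] : exists b, b \in A :\ a by apply/card_gt0P; lia.
have A2 : 1 <= #|A :\ a :\ b| by move: A1; rewrite (cardsD1 b (A :\ a)) bA; lia.
have [c cA] : exists c, c \in A :\ a :\ b by apply/card_gt0P; lia.
move: bA cA; rewrite !inE => /andP[ba bi] /andP[cb /andP[ca ci]].
move: aA; rewrite inE => ai.
set T := c |: [set a; b].
have T3 : #|T| = 3.
  rewrite cardsU1 cards2 !inE negb_or ca cb eq_sym ba; done.
have TA : forall x, x \in T -> p x = i.
  by move=> x; rewrite !inE => /orP[/eqP->|/orP[]/eqP->]; apply/eqP.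
apply: NNPP => Hn.
have Hb : forall P : {set V}, (P \subset T) && (#|P| == 2) ->
    3 * #|\bigcap_(x in P) L x| <= k - 1.
  move=> P /andP[PT /cards2P [u [v [uv PE]]]].
  have uT : u \in T by apply: (subsetP PT); rewrite PE set21.
  have vT : v \in T by apply: (subsetP PT); rewrite PE set22.
  have -> : \bigcap_(x in P) L x = L u :&: L v.
    apply/setP => y; rewrite PE; apply/bigcapP/setIP.
    - by move=> H; split; apply: H; rewrite ?set21 ?set22.
    - by move=> [yu yv] x; rewrite !inE => /orP[]/eqP->.
  case: (leqP k (3 * #|L u :&: L v|)) => h; last by lia.
  by exfalso; apply: Hn; exists u, v; split => //; apply: TA.
have := P1 T T3.
have : 3 * \sum_(P : {set V} | (P \subset T) && (#|P| == 2)) #|\bigcap_(x in P) L x|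
       <= \sum_(P : {set V} | (P \subset T) && (#|P| == 2)) (k - 1).
  by rewrite big_distrr /=; apply: leq_sum => P HP; apply: Hb.
have -> : \sum_(P : {set V} | (P \subset T) && (#|P| == 2)) (k - 1) = 3 * (k - 1).
  rewrite (eq_bigl (fun P : {set V} => P \in [set P : {set V} | P \subset T & #|P| == 2])); last by move=> P; rewrite inE.
  by rewrite sum_nat_const cards_draws T3.
lia.
Qed.
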